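(* Let $G$ be a compact abelian group with discrete dual group $\Gamma$, let $N \in \mathbb{N}$ and $E \subset \Gamma$. If $E$ is independent and $\mathbb{Z}_N \subset \operatorname{range}(\gamma)$ for all $\gamma \in E$, then $E$ is $N$-PR.
   Context: Characters are written multiplicatively; $\mathbb{Z}_N$ is identified with the $N$-th roots of unity in the unit circle $\mathbb{T}$, and $\operatorname{range}(\gamma) = \gamma(G)$. A set $E$ of characters is independent if whenever $\gamma_1,\dots,\gamma_k \in E$ are distinct, $m_i \in \mathbb{Z}$ and $\prod_i \gamma_i^{m_i} = 1$, then $\gamma_i^{m_i} = 1$ for all $i$. A subset $E \subset \Gamma$ is $N$-PR if for every function $\varphi: E \to \mathbb{Z}_N$ there exists $x \in G$ with $\varphi(\gamma) = \gamma(x)$ for all $\gamma \in E$. *)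

(* Defs.v *)
From HB Require Import structures.
From mathcomp Require Import all_boot all_order all_algebra.
From mathcomp Require Import all_classical all_reals all_analysis.
Set Implicit Arguments. Unset Strict Implicit. Unset Printing Implicit Defensive.
Import Order.TTheory GRing.Theory Num.Theory.
Import numFieldNormedType.Exports.
Local Open Scope ring_scope.
Local Open Scope classical_set_scope.

(* The circle group T is represented inside C = R * R (with the product
   topology); complex multiplication written out on pairs. *)
Section Circle.
Variable R : realType.

Definition cmul (z w : R * R) : R * R :=
  (z.1 * w.1 - z.2 * w.2, z.1 * w.2 + z.2 * w.1).
Definition cone : R * R := (1, 0).
(* complex conjugate = inverse on the unit circle *)
Definition cconj (z : R * R) : R * R := (z.1, - z.2).
Definition cexpn (z : R * R) (n : nat) : R * R := iter n (cmul z) cone.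
Definition cexpz (z : R * R) (m : int) : R * R :=
  match m with
  | Posz n => cexpn z n
  | Negz n => cexpn (cconj z) n.+1
  end.

Definition on_circle (z : R * R) : Prop := z.1 ^+ 2 + z.2 ^+ 2 = 1.

(* Z_N identified with the N-th roots of unity in T *)
Definition unit_roots (N : nat) (z : R * R) : Prop :=
  on_circle z /\ cexpn z N = cone.
End Circle.

Section Characters.
Variables (R : realType) (G : topologicalZmodType).

(* continuous characters G -> T, i.e. the elements of the dual group Gamma *)
Definition is_character (g : G -> R * R) : Prop :=
  [/\ forall x, on_circle (g x),
      forall x y, g (x + y) = cmul (g x) (g y)
    & continuous g].

Definition independent (E : set (G -> R * R)) : Prop :=
  forall (k : nat) (g : 'I_k -> G -> R * R) (m : 'I_k -> int),
    injective g -> (forall i, E (g i)) ->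
    (forall x, \big[@cmul R/cone R]_(i < k) cexpz (g i x) (m i) = cone R) ->
    forall i x, cexpz (g i x) (m i) = cone R.

Definition N_PR (N : nat) (E : set (G -> R * R)) : Prop :=
  forall phi : (G -> R * R) -> R * R,
    (forall g, E g -> unit_roots N (phi g)) ->
    exists x : G, forall g, E g -> phi g = g x.
End Characters.

(* Main.v *)
Require Import Defs.
From HB Require Import structures.
From mathcomp Require Import all_boot all_order all_algebra.
From mathcomp Require Import all_classical all_reals all_analysis.
From mathcomp Require finmap.
From mathcomp.algebra_tactics Require Import ring lra.
Import Order.TTheory GRing.Theory Num.Theory.
Import numFieldNormedType.Exports.
Local Open Scope ring_scope.
Local Open Scope classical_set_scope.
Set Implicit Arguments. Unset Strict Implicit. Unset Printing Implicit Defensive.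

Section Circ.
Variable R : realType.
Implicit Types (a b t : R) (z w : R * R).

Definition e (t : R) : R * R := (cos t, sin t).
Definition tpi : R := pi *+ 2.

Lemma eD a b : e (a + b) = cmul (e a) (e b).
Proof. by rewrite /e /cmul /= cosD sinD; congr pair; ring. Qed.

Lemma e0 : e 0 = cone R.
Proof. by rewrite /e cos0 sin0. Qed.

Lemma eN a : e (- a) = cconj (e a).
Proof. by rewrite /e /cconj /= cosN sinN. Qed.

Lemma e_circle a : on_circle (e a).
Proof. exact: cos2Dsin2. Qed.

Lemma cexpn_e a n : cexpn (e a) n = e (n%:R * a).
Proof.
elim: n => [|n IH]; first by rewrite mul0r e0.
by rewrite /cexpn iterS -/(cexpn _ _) IH -eD mulrSr; congr e; ring.
Qed.

Lemma cexpz_e a m : cexpz (e a) m = e (m%:~R * a).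
Proof.
case: m => n; first by rewrite /= cexpn_e.
by rewrite /cexpz -eN cexpn_e NegzE mulrNz mulrN mulNr.
Qed.

Lemma e2pi : e tpi = cone R.
Proof. by rewrite /e /tpi cos2pi sin2pi. Qed.

Lemma cexpn_cone n : cexpn (cone R) n = cone R.
Proof. by rewrite -e0 cexpn_e mulr0. Qed.

Lemma e_int m : e (m%:~R * tpi) = cone R.
Proof.
rewrite -cexpz_e e2pi; case: m => n; rewrite /cexpz; first exact: cexpn_cone.
have -> : cconj (cone R) = cone R by rewrite /cconj /cone /= oppr0.
exact: cexpn_cone.
Qed.

Lemma e_addint a m : e (a + m%:~R * tpi) = e a.
Proof. by rewrite eD e_int /cmul /=; congr pair; ring. Qed.

Lemma tpi_gt0 : 0 < tpi.
Proof. by rewrite /tpi pmulrn_lgt0 // pi_gt0. Qed.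

Lemma e_eq1 t : e t = cone R -> exists m : int, t = m%:~R * tpi.
Proof.
move=> et.
have tp0 := tpi_gt0.
set n := Num.floor (t / tpi).
have /andP [h1 h2] := floor_itv (t / tpi).
set r := t - n%:~R * tpi.
have r0 : 0 <= r.
  rewrite /r subr_ge0 -ler_pdivlMr //.
have r2 : r < tpi.
  rewrite /r ltrBlDl.
  have -> : n%:~R * tpi + tpi = (n + 1)%:~R * tpi by rewrite intrD mulrDl mul1r.
  by rewrite -ltr_pdivrMr.
have er : e r = cone R by rewrite -(e_addint r n) /r subrK.
have cr : cos r = 1 by move: er; rewrite /e => -[].
exists n; apply/eqP; rewrite -subr_eq0 -/r; apply/eqP.
have [rpi|pir] := lerP r pi.
  apply: (@cos_inj R); rewrite ?cos0 ?cr //; rewrite in_itv /=.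
  - by rewrite r0 rpi.
  - by rewrite lexx pi_ge0.
exfalso.
have c2 : cos (tpi - r) = 1.
  have h := e_addint (- r) 1.
  have i1 : (1:int)%:~R = 1 :> R by [].
  rewrite i1 mul1r addrC eN /e /cconj /= in h.
  by case: h => -> _.
have : tpi - r = 0.
  apply: (@cos_inj R); rewrite ?cos0 ?c2 //; rewrite in_itv /=.
  - rewrite subr_ge0 (ltW r2) /=.
    by rewrite lerBlDr /tpi mulr2n lerD2l ltW.
  - by rewrite lexx pi_ge0.
by move/eqP; rewrite subr_eq0 => /eqP rt; move: r2; rewrite rt ltxx.
Qed.

Lemma e_eqP a b : e a = e b -> exists m : int, a = b + m%:~R * tpi.
Proof.
move=> h; have : e (a - b) = cone R by rewrite eD h -eD subrr e0.
by case/e_eq1 => m hm; exists m; rewrite -hm addrC subrK.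
Qed.

Lemma e_cancel a b c : e (a + c) = e (b + c) -> e a = e b.
Proof.
move=> h; rewrite -(addrK c a) -(addrK c b) [e (a + c - c)]eD [e (b + c - c)]eD.
by rewrite h.
Qed.

Lemma e_congr_opp a b : e a = e b -> e (- a) = e (- b).
Proof. by rewrite !eN => ->. Qed.

Lemma e_congr_mul a b (m : int) : e a = e b -> e (m%:~R * a) = e (m%:~R * b).
Proof. by rewrite -!cexpz_e => ->. Qed.

Lemma circle_bound z : on_circle z -> -1 <= z.1 <= 1.
Proof.
rewrite /on_circle => h.
have h2 : z.1 ^+ 2 <= 1 by rewrite -h lerDl sqr_ge0.
by apply/andP; split; nra.
Qed.

Definition arg (z : R * R) : R := if 0 <= z.2 then acos z.1 else - acos z.1.

Lemma arg_e z : on_circle z -> e (arg z) = z.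
Proof.
move=> hz; have hb := circle_bound hz.
have hin : z.1 \in `[-1, 1]%R by rewrite in_itv /=.
have s2 : Num.sqrt (1 - z.1 ^+ 2) = `|z.2|.
  by move: hz; rewrite /on_circle => hz; rewrite -hz addrC addKr sqrtr_sqr.
rewrite /arg; case: ifP => h2; rewrite ?eN /e /cconj /= ?acosK // sin_acos // s2.
  by rewrite ger0_norm //; case: z {hz hb hin s2} h2.
by rewrite ltr0_norm ?opprK ?ltNge ?h2 //; case: z {hz hb hin s2} h2.
Qed.

Lemma e_inj_small a b : e a = e b -> `|a - b| < tpi -> a = b.
Proof.
case/e_eqP => m -> h; move: h; rewrite addrC addKr normrM.
rewrite (gtr0_norm tpi_gt0) -{2}[tpi]mul1r ltr_pM2r ?tpi_gt0 //.
rewrite -intr_norm ltrz1.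
by case: m => [[|n]|n] //= _; rewrite mulr0z mul0r addr0.
Qed.

End Circ.
Arguments tpi {R}.
Arguments tpi_gt0 {R}.
Arguments e2pi {R}.
Arguments e0 {R}.

Section Hom.
Variables (R : realType) (V : zmodType) (f : V -> R * R).
Hypotheses (fc : forall x, on_circle (f x))
  (fh : forall x y, f (x + y) = cmul (f x) (f y)).

Let F x := arg (f x).
Lemma fe x : f x = e (F x). Proof. by rewrite arg_e. Qed.

Lemma fD x y : e (F (x + y)) = e (F x + F y).
Proof. by rewrite -fe fh !fe eD. Qed.

Lemma f0 : f 0 = cone R.
Proof.
rewrite fe -e0; apply: (@e_cancel _ _ _ (F 0)).
by rewrite -fD addr0 add0r.
Qed.

Lemma fN x : f (- x) = e (- F x).
Proof.
rewrite fe; apply: (@e_cancel _ _ _ (F x)).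
rewrite addNr e0 -f0 fe.
have -> : (0 : V) = x + - x by rewrite subrr.
by rewrite fD addrC.
Qed.

Lemma fB x y : f (x - y) = e (F x - F y).
Proof. by rewrite fh fN fe -eD. Qed.

Lemma f_muln x n : f (x *+ n) = e (n%:R * F x).
Proof.
elim: n => [|n IH]; first by rewrite mulr0n f0 mul0r e0.
by rewrite mulrS fh IH fe -eD mulrSr mulrDl mul1r addrC.
Qed.

Lemma f_mulz x (m : int) : f (x *~ m) = e (m%:~R * F x).
Proof.
case: m => n; first exact: f_muln.
rewrite NegzE mulrNz fN mulrNz mulNr; apply: e_congr_opp.
by rewrite -fe; exact: f_muln.
Qed.

Lemma f_mulz' x (m : int) : f (x *~ m) = cexpz (f x) m.
Proof. by rewrite f_mulz fe cexpz_e. Qed.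

End Hom.

Section SubR.
Variable R : realType.

Lemma floor_rem (a t : R) : 0 < a ->
  0 <= t - (Num.floor (t / a))%:~R * a < a.
Proof.
move=> a0; set n := Num.floor (t / a).
have /andP [h1 h2] := floor_itv (t / a).
apply/andP; split; first by rewrite subr_ge0 -ler_pdivlMr.
rewrite ltrBlDl.
have -> : n%:~R * a + a = (n + 1)%:~R * a by rewrite intrD mulrDl mul1r.
by rewrite -ltr_pdivrMr.
Qed.

Lemma closed_approx (A : set R) t : closed A ->
  (forall eps, 0 < eps -> exists y, A y /\ `|t - y| < eps) -> A t.
Proof.
move=> cA h; rewrite (closure_id A).1 //= => B /nbhs_ballP [eps e0 hB].
have [y [Ay ty]] := h eps e0; exists y; split => //; apply: hB.
by rewrite -ball_normE /ball_ /=.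
Qed.

Section Grp.
Variable A : set R.
Hypotheses (A0 : A 0) (AB : forall a b, A a -> A b -> A (a - b)).

Lemma AN a : A a -> A (- a).
Proof. by move=> h; rewrite -sub0r; exact: AB. Qed.

Lemma AD a b : A a -> A b -> A (a + b).
Proof. by move=> ha hb; rewrite -[b]opprK; apply: AB => //; exact: AN. Qed.

Lemma Amuln a n : A a -> A (n%:R * a).
Proof.
move=> ha; elim: n => [|n IH]; first by rewrite mul0r.
by rewrite mulrSr mulrDl mul1r; exact: AD.
Qed.

Lemma Amulz a (m : int) : A a -> A (m%:~R * a).
Proof.
move=> ha; case: m => n; first exact: Amuln.
by rewrite NegzE mulrNz mulNr; apply: AN; exact: Amuln.
Qed.

Lemma closed_subgroupR : closed A -> forall p, 0 < p -> A p ->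
  (forall t, A t) \/
  exists a0, [/\ 0 < a0, A a0 & forall t, A t -> exists n : int, t = n%:~R * a0].
Proof.
move=> cA p p0 Ap.
have [dense|] := pselect (forall eps, 0 < eps -> exists a, A a /\ 0 < a < eps).
  left => t; apply: closed_approx => // eps e0.
  have [a [Aa /andP [a0 ae]]] := dense eps e0.
  exists ((Num.floor (t / a))%:~R * a); split; first exact: Amulz.
  have /andP [r0 r1] := floor_rem t a0.
  by rewrite ger0_norm // (lt_trans r1).
move=> /existsNP [eps /not_implyP [e0 /forallNP heps]].
right.
set P := [set a | A a /\ 0 < a].
have hinf : has_inf P.
  split; first by exists p.
  by exists 0 => x [_ /ltW].
have [a [Aa a0] ha] := inf_adherent e0 hinf.
have amin : forall b, P b -> a <= b.
  move=> b Pb; rewrite leNgt; apply/negP => ba.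
  apply: (heps (a - b)); split; first by apply: AB => //; case: Pb.
  rewrite subr_gt0 ba /=.
  have : inf P <= b by apply: ge_inf => //; case: hinf.
  by move=> hb; rewrite ltrBlDl; apply: (lt_le_trans ha); rewrite lerD2r.
exists a; split => // t At.
exists (Num.floor (t / a)); apply/eqP; rewrite -subr_eq0; apply/eqP.
have /andP [r0 r1] := floor_rem t a0.
move: r0; rewrite le_eqVlt => /orP [/eqP -> //|rpos].
have : a <= t - (Num.floor (t / a))%:~R * a.
  by apply: amin; split => //; apply: AB => //; exact: Amulz.
by rewrite leNgt r1.
Qed.

End Grp.
End SubR.

Section Topo.
Variable R : realType.

Lemma hausRR : hausdorff_space (R * R)%type.
Proof.
move=> p q H.
have key : forall eps : R, 0 < eps -> `|p.1 - q.1| < eps *+ 2 /\ `|p.2 - q.2| < eps *+ 2.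
  move=> eps e0.
  have [z [[h1 h2] [h3 h4]]] := H _ _ (nbhsx_ballx p eps e0) (nbhsx_ballx q eps e0).
  move: h1 h2 h3 h4; rewrite -!ball_normE /ball_ /= => h1 h2 h3 h4.
  split.
    rewrite (_ : p.1 - q.1 = (p.1 - z.1) + (z.1 - q.1)); last by ring.
    rewrite mulr2n; apply: (le_lt_trans (ler_normD _ _)); apply: ltrD => //.
    by rewrite distrC.
  rewrite (_ : p.2 - q.2 = (p.2 - z.2) + (z.2 - q.2)); last by ring.
  rewrite mulr2n; apply: (le_lt_trans (ler_normD _ _)); apply: ltrD => //.
  by rewrite distrC.
have eq0 : forall a b : R, (forall eps, 0 < eps -> `|a - b| < eps *+ 2) -> a = b.
  move=> a b h; apply/eqP; rewrite -subr_eq0 -normr_eq0; apply/eqP.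
  apply/le_anti; rewrite normr_ge0 andbT; apply/ler_addgt0Pr => eps e0.
  have e2 : 0 < eps / 2 by rewrite divr_gt0.
  rewrite add0r; apply: ltW; have := h (eps / 2) e2.
  by rewrite mulr2n -splitr.
case: p q H key => [p1 p2] [q1 q2] _ key; congr pair; apply: eq0 => eps e0.
  exact: (key eps e0).1.
exact: (key eps e0).2.
Qed.

Lemma e_cont : continuous (@e R).
Proof.
move=> t; exact: (cvg_pair (@continuous_cos R t) (@continuous_sin R t)).
Qed.

Lemma fst_cont (T : topologicalType) (f : T -> R * R) :
  continuous f -> continuous (fun x => (f x).1).
Proof. by move=> fc x; apply: continuous_comp; [exact: fc | exact: cvg_fst]. Qed.

Lemma snd_cont (T : topologicalType) (f : T -> R * R) :
  continuous f -> continuous (fun x => (f x).2).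
Proof. by move=> fc x; apply: continuous_comp; [exact: fc | exact: cvg_snd]. Qed.

End Topo.

Section Chars.
Variables (R : realType) (G : topologicalZmodType).

Definition subgrp (K : set G) := K 0 /\ (forall x y, K x -> K y -> K (x - y)).

Lemma circle_cone (z : R * R) : on_circle z -> z.1 = 1 -> z = cone R.
Proof.
rewrite /on_circle => hz h1; move: hz; rewrite h1 expr1n => /eqP.
rewrite -subr_eq0 addrC addKr sqrf_eq0 => /eqP h2.
by case: z h1 h2 => a b /= -> ->.
Qed.

Lemma cont_ker (K : set G) (g h : G -> R * R) : compact K ->
  is_character g -> is_character h ->
  (forall x, K x -> g x = cone R -> h x = cone R) ->
  forall eps, 0 < eps -> exists2 del, 0 < del &
    forall x, K x -> 1 - (g x).1 < del -> 1 - (h x).1 < eps.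
Proof.
move=> cK [gci gh gco] [hci hh hco] hker eps e0.
have hcont : continuous (fun x => 1 - (h x).1).
  move=> x; apply: cvgB; [exact: cvg_cst | exact: fst_cont].
have ucont : continuous (fun x => 1 - (g x).1).
  move=> x; apply: cvgB; [exact: cvg_cst | exact: fst_cont].
set C := K `&` [set x | eps <= 1 - (h x).1].
have clC : closed [set x | eps <= 1 - (h x).1].
  have -> : [set x | eps <= 1 - (h x).1] =
     (fun x => 1 - (h x).1) @^-1` [set y | eps <= y] by [].
  by apply: (continuous_closedP _).1 => //; exact: closed_ge.
have cC : compact C by exact: compact_closedI.
set u := fun x => 1 - (g x).1.
have cU : compact (u @` C).
  by apply: continuous_compact => //; exact: continuous_subspaceT.
have clU : closed (u @` C) by exact: compact_closed (@Rhausdorff R) cU.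
have n0 : ~ (u @` C) 0.
  move=> [x [Kx hx] ux0].
  have : g x = cone R.
    by apply: circle_cone => //; move/eqP: ux0; rewrite subr_eq0 => /eqP <-.
  move/(hker _ Kx) => hx1; move: hx; rewrite /= hx1 /= subrr.
  by rewrite leNgt e0.
have : nbhs (0 : R) (~` (u @` C)).
  by apply: open_nbhs_nbhs; split => //; exact: closed_openC.
move=> /nbhs_ballP [del d0 hdel]; exists del => // x Kx uxd.
have ux0 : 0 <= u x by rewrite /u subr_ge0; case/andP: (circle_bound (gci x)).
have : ball (0 : R) del (u x) by rewrite -ball_normE /ball_ /= sub0r normrN ger0_norm.
move/hdel => nC; rewrite ltNge; apply/negP => hle; apply: nC.
by exists x.
Qed.
End Chars.

Section Dich.
Variables (R : realType) (G : topologicalZmodType).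
Variable K : set G.
Hypotheses (cK : compact K) (sK : subgrp K).

Lemma K0 : K 0. Proof. by case: sK. Qed.
Lemma KB x y : K x -> K y -> K (x - y). Proof. by case: sK => _; apply. Qed.
Lemma KN x : K x -> K (- x). Proof. by move=> h; rewrite -sub0r; apply: KB => //; exact: K0. Qed.
Lemma KD x y : K x -> K y -> K (x + y).
Proof. by move=> hx hy; rewrite -[y]opprK; apply: KB => //; exact: KN. Qed.
Lemma Kmuln x n : K x -> K (x *+ n).
Proof.
move=> hx; elim: n => [|n IH]; first by rewrite mulr0n; exact: K0.
by rewrite mulrS; exact: KD.
Qed.
Lemma Kmulz x (m : int) : K x -> K (x *~ m).
Proof.
move=> hx; case: m => n; first exact: Kmuln.
by rewrite NegzE mulrNz; apply: KN; exact: Kmuln.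
Qed.

Variable g : G -> R * R.
Hypothesis gc : is_character g.

Let gci : forall x, on_circle (g x). Proof. by case: gc. Qed.
Let gh : forall x y, g (x + y) = cmul (g x) (g y). Proof. by case: gc. Qed.
Let gco : continuous g. Proof. by case: gc. Qed.

Lemma char_dich :
  (forall t, exists x, K x /\ g x = e t) \/
  exists a0, [/\ 0 < a0, exists d : int, d != 0 /\ tpi = d%:~R * a0,
     exists x1, K x1 /\ g x1 = e a0 &
     forall x, K x -> exists n : int, g x = e (n%:~R * a0)].
Proof.
set A := [set t | exists x, K x /\ g x = e t].
have clA : closed A.
  have -> : A = (@e R) @^-1` (g @` K).
    by apply/seteqP; split => t; [case => x [Kx gx]; exists x | case => x Kx gx; exists x].
  apply: (continuous_closedP _).1; first exact: e_cont.
  apply: compact_closed; first exact: hausRR.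
  by apply: continuous_compact => //; exact: continuous_subspaceT.
have A0 : A 0 by exists 0; split; [exact: K0 | rewrite e0; exact: f0].
have AB : forall a b, A a -> A b -> A (a - b).
  move=> a b [x [Kx gx]] [y [Ky gy]]; exists (x - y); split; first exact: KB.
  by rewrite (fB gci gh) eD eN (arg_e (gci x)) (arg_e (gci y)) gx gy -eN -eD.
have Atpi : A tpi by exists 0; split; [exact: K0 | rewrite e2pi; exact: f0].
have [full|[a0 [a0p Aa0 hA]]] := closed_subgroupR A0 AB clA tpi_gt0 Atpi.
  by left.
right; exists a0; split => //.
- have [d hd] := hA _ Atpi; exists d; split => //.
  apply/negP => /eqP d0; move: hd; rewrite d0 mulr0z mul0r => h0.
  by move: (@tpi_gt0 R); rewrite h0 ltxx.
move=> x Kx.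
have : A (arg (g x)) by exists x; split => //; rewrite arg_e.
by case/hA => n hn; exists n; rewrite -hn arg_e.
Qed.

Lemma char_onto (t : R * R) : on_circle t ->
  (forall m : int, (forall x, K x -> cexpz (g x) m = cone R) -> cexpz t m = cone R) ->
  exists x, K x /\ g x = t.
Proof.
move=> tc hrel.
have [full|[a0 [a0p [d [dn0 hd]] [x1 [K1 g1]] hall]]] := char_dich.
  by have [x [Kx gx]] := full (arg t); exists x; rewrite arg_e in gx.
have : cexpz t d = cone R.
  apply: hrel => x Kx; have [n ->] := hall x Kx.
  rewrite cexpz_e (_ : d%:~R * (n%:~R * a0) = n%:~R * tpi); first exact: e_int.
  by rewrite hd; ring.
rewrite -{1}(arg_e tc) cexpz_e => /e_eq1 [k hk].
have hk' : arg t = k%:~R * a0.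
  apply: (@mulfI _ (d%:~R)); first by rewrite intr_eq0.
  by rewrite hk hd; ring.
exists (x1 *~ k); split; first exact: Kmulz.
rewrite (f_mulz gci gh) -(arg_e tc) hk'; apply: e_congr_mul.
by rewrite arg_e.
Qed.

Variable h : G -> R * R.
Hypothesis hc : is_character h.
Let hci : forall x, on_circle (h x). Proof. by case: hc. Qed.
Let hh : forall x y, h (x + y) = cmul (h x) (h y). Proof. by case: hc. Qed.

Hypothesis hker : forall x, K x -> g x = cone R -> h x = cone R.

Lemma char_wd x y : K x -> K y -> g x = g y -> h x = h y.
Proof.
move=> Kx Ky gxy.
have Kd : K (x - y) by exact: KB.
have : g (x - y) = cone R.
  by rewrite (fB gci gh) -e0 -(subrr (arg (g y))); congr e; rewrite gxy.
move/(hker Kd); rewrite (fB hci hh) => hd.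
rewrite (fe hci) (fe hci y); apply: (@e_cancel _ _ _ (- arg (h y))).
by rewrite hd subrr e0.
Qed.

Hypothesis full_case : (forall t, exists x, K x /\ g x = e t) ->
  exists j : int, forall x, K x -> h x = cexpz (g x) j.

Lemma char_ker : exists j : int, forall x, K x -> h x = cexpz (g x) j.
Proof.
have [full|[a0 [a0p [d [dn0 hd]] [x1 [K1 g1]] hall]]] := char_dich.
  exact: full_case.
set b := arg (h x1).
have : h (x1 *~ d) = cone R.
  apply: hker; first exact: Kmulz.
  rewrite (f_mulz' gci gh) g1 cexpz_e -hd; exact: e2pi.
rewrite (f_mulz hci hh) => /e_eq1 [j hj].
have hb : b = j%:~R * a0.
  apply: (@mulfI _ (d%:~R)); first by rewrite intr_eq0.
  by rewrite hj hd; ring.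
exists j => x Kx.
have [n gn] := hall x Kx.
have Ky : K (x1 *~ n) by exact: Kmulz.
have -> : h x = h (x1 *~ n).
  apply: char_wd => //; rewrite gn (f_mulz gci gh); apply: e_congr_mul.
  by rewrite arg_e.
rewrite (f_mulz hci hh) -/b hb gn cexpz_e; congr e; ring.
Qed.

End Dich.

Section AddBd.
Variable R : realType.
Variables (f : R -> R) (eta M : R).
Hypotheses (eta0 : 0 < eta)
  (fadd : forall a b, `|a| < eta -> `|b| < eta -> `|a + b| < eta -> f (a + b) = f a + f b)
  (fbd : forall t, `|t| < eta -> `|f t| <= M).

Lemma fz0 : f 0 = 0.
Proof.
have := @fadd 0 0; rewrite addr0 !normr0 => /(_ eta0 eta0 eta0) h.
lra.
Qed.

Lemma fmuln n s : `|n%:R * s| < eta -> f (n%:R * s) = n%:R * f s.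
Proof.
elim: n => [|n IH]; first by rewrite !mul0r fz0.
move=> hn.
have hs : `|s| < eta.
  apply: le_lt_trans hn; rewrite normrM ler_peMl // ger0_norm // ler1n //.
have hns : `|n%:R * s| < eta.
  apply: le_lt_trans hn; rewrite !normrM ler_wpM2r //.
  by rewrite !ger0_norm // ler_nat.
have hsum : n.+1%:R * s = n%:R * s + s by rewrite mulrSr mulrDl mul1r.
rewrite hsum in hn *; rewrite fadd // IH //; ring.
Qed.

Hypothesis fh0 : f (eta / 2) = 0.

Let h0 := eta / 2.
Let h0p : 0 < h0. Proof. by rewrite /h0 divr_gt0. Qed.
Let h0e : h0 < eta. Proof. by rewrite /h0 ltr_pdivrMr // ltr_pMr // ltr1n. Qed.

Lemma fs0 n : f (h0 / 2 ^+ n) = 0.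
Proof.
have p2 : (0 : R) < 2 ^+ n by rewrite exprn_gt0.
have := @fmuln (2 ^ n)%N (h0 / 2 ^+ n).
rewrite natrX mulrC divfK ?gt_eqF // ger0_norm ?(ltW h0p) // => /(_ h0e).
rewrite fh0 => /esym /eqP; rewrite mulf_eq0 expf_eq0 /= => /orP [/andP [_ /eqP h2] | /eqP //].
by move: h2; move/eqP; rewrite pnatr_eq0.
Qed.

Lemma fbound n t : 0 <= t < h0 -> `|f t| <= M / 2 ^+ n.
Proof.
move=> /andP [t0 th].
have p2 : (0 : R) < 2 ^+ n by rewrite exprn_gt0.
set s := h0 / 2 ^+ n.
have s0 : 0 < s by rewrite divr_gt0.
have /andP [r0 r1] := floor_rem t s0.
set q := Num.floor (t / s).
have q0 : 0 <= q by rewrite floor_ge0 divr_ge0 // ltW.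
set r := t - q%:~R * s.
have qs0 : 0 <= q%:~R * s by rewrite mulr_ge0 // ?ler0z // ltW.
have qst : q%:~R * s <= t by rewrite -subr_ge0.
have hst : s <= h0 by rewrite /s ler_pdivrMr //; apply: ler_peMr; [exact: ltW | apply: exprn_ege1; rewrite ler1n].
have nq : q%:~R = (`|q|%N)%:R :> R by rewrite natr_absz ger0_norm.
have e1 : `|q%:~R * s| < eta by rewrite ger0_norm //; apply: (le_lt_trans qst); apply: (lt_trans th).
have e2 : `|r| < eta by rewrite ger0_norm //; apply: (lt_le_trans r1); apply: (le_trans hst); exact: ltW.
have e3 : `|q%:~R * s + r| < eta by rewrite /r addrC subrK ger0_norm //; exact: lt_trans th _.
have -> : t = q%:~R * s + r by rewrite /r addrC subrK.
rewrite fadd // nq fmuln -?nq // fs0 mulr0 add0r.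
have e4 : `|(2 ^ n)%N%:R * r| < eta.
  rewrite natrX ger0_norm ?mulr_ge0 ?exprn_ge0 //.
  apply: (lt_trans _ h0e); rewrite -ltr_pdivlMl //.
  by rewrite mulrC.
have := fbd e4; rewrite fmuln // normrM natrX ger0_norm ?exprn_ge0 //.
by rewrite ler_pdivlMr // mulrC.
Qed.

Lemma small_zero (x : R) : (forall n, `|x| <= M / 2 ^+ n) -> x = 0.
Proof.
move=> hx; apply/eqP; rewrite -normr_eq0; apply/negP => /negP nx.
have xp : 0 < `|x| by rewrite lt_def nx normr_ge0.
set n := Num.Def.archi_bound (M / `|x|).
have := @upper_nthrootP R (M / `|x|) n (leqnn _).
rewrite ltr_pdivrMr // => hM.
have := hx n; rewrite ler_pdivlMr ?exprn_gt0 // mulrC.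
by rewrite leNgt hM.
Qed.

Lemma add_bounded_zero t : `|t| < h0 -> f t = 0.
Proof.
move=> ht; have [t0|t0] := leP 0 t.
  by apply: small_zero => n; apply: fbound; rewrite t0 -(ger0_norm t0).
have : f (- t) = 0.
  apply: small_zero => n; apply: fbound.
  by rewrite oppr_ge0 ltW //= -(ltr0_norm t0).
have ht' : `|t| < eta by exact: lt_trans ht h0e.
have h2 := @fadd t (- t) ht'; rewrite normrN subrr normr0 fz0 in h2.
have := h2 ht' eta0; lra.
Qed.

End AddBd.

Section Full.
Variable R : realType.

Lemma cos_near0 (d : R) : 0 < d ->
  exists2 eta, 0 < eta & forall t, `|t| < eta -> 1 - cos t < d.
Proof.
move=> d0; have := @continuous_cos R 0; rewrite /continuous_at cos0.
move=> /(_ _ (nbhsx_ballx (1 : R) d d0)) /nbhs_ballP [eta eta0 H]; exists eta => // t ht.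
have : ball (0 : R) eta t by rewrite -ball_normE /ball_ /= sub0r normrN.
move/H; rewrite /= -ball_normE /ball_ /= => h.
exact: le_lt_trans (ler_norm _) h.
Qed.

Lemma circle_bound2 (z : R * R) : on_circle z -> -1 <= z.2 <= 1.
Proof.
rewrite /on_circle => h.
have h2 : z.2 ^+ 2 <= 1 by rewrite -h lerDr sqr_ge0.
by apply/andP; split; nra.
Qed.

Variables (G : topologicalZmodType) (K : set G).
Hypotheses (cK : compact K) (sK : subgrp K).
Variables (g h : G -> R * R).
Hypotheses (gc : is_character g) (hc : is_character h).
Hypothesis hker : forall x, K x -> g x = cone R -> h x = cone R.

Lemma full_ker : (forall t, exists x, K x /\ g x = e t) ->
  exists j : int, forall x, K x -> h x = cexpz (g x) j.
Proof.
move=> full.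
have [gci gh gco] := gc; have [hci hh hco] := hc.
have [X hX] := choice full.
set D := fun t => h (X t).
have Dci : forall t, on_circle (D t) by move=> t; exact: hci.
have Dh : forall a b, D (a + b) = cmul (D a) (D b).
  move=> a b; rewrite /D -hh; apply: (char_wd sK gc hc hker).
  - by case: (hX (a + b)).
  - by apply: KD => //; [case: (hX a) | case: (hX b)].
  by rewrite gh (hX a).2 (hX b).2 (hX (a + b)).2 eD.
have Dx : forall x, K x -> h x = D (arg (g x)).
  move=> x Kx; apply: (char_wd sK gc hc hker) => //; first by case: (hX (arg (g x))).
  by rewrite (hX _).2 arg_e.
have [del del0 hdel] := cont_ker cK gc hc hker ltr01.
have [eta eta0 heta] := cos_near0 del0.
have Dpos : forall t, `|t| < eta -> 0 < (D t).1.
  move=> t ht; have [Kt gt] := hX t.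
  have := hdel _ Kt; rewrite gt /= => /(_ (heta _ ht)).
  rewrite /D => hh1; lra.
set L := fun t => asin ((D t).2).
have eL : forall t, `|t| < eta -> e (L t) = D t.
  move=> t ht; have hb := circle_bound2 (Dci t).
  have hin : (D t).2 \in `[-1, 1]%R by rewrite in_itv /=.
  rewrite /e /L cos_asin // asinK //.
  have := Dci t; rewrite /on_circle => hc2.
  rewrite (_ : 1 - (D t).2 ^+ 2 = (D t).1 ^+ 2); last by rewrite -hc2; ring.
  rewrite sqrtr_sqr ger0_norm; last exact: ltW (Dpos _ ht).
  by case: (D t).
have Lb : forall t, `|L t| <= pi / 2.
  move=> t; have hb := circle_bound2 (Dci t).
  by rewrite ler_norml asin_geNpi2 // asin_lepi2.
have Ladd : forall a b, `|a| < eta -> `|b| < eta -> `|a + b| < eta ->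
    L (a + b) = L a + L b.
  move=> a b ha hb hab; apply: e_inj_small.
    by rewrite eL // Dh eD !eL.
  have := Lb (a + b); have := Lb a; have := Lb b.
  have := @pi_gt0 R; rewrite /tpi mulr2n.
  move=> p0 h1 h2 h3.
  apply: (le_lt_trans (ler_normB _ _)); apply: (le_lt_trans (lerD h3 (ler_normD _ _))).
  have hq : pi = pi / 2 + pi / 2 :> R by rewrite -splitr.
  move: h1 h2 h3 hq; move: (pi / 2) => q h1 h2 h3 hq.
  rewrite hq; lra.
set c := L (eta / 2) / (eta / 2).
have eta2 : 0 < eta / 2 by rewrite divr_gt0.
have Lc : forall t, `|t| < eta / 2 -> L t = c * t.
  move=> t ht.
  have := @add_bounded_zero R (fun t => L t - c * t) eta (pi / 2 + `|c| * eta) eta0.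
  move=> /(_ _ _ _ t ht) => H; apply/eqP; rewrite -subr_eq0; apply/eqP; apply: H.
  - move=> a b ha hb hab; rewrite Ladd //; ring.
  - move=> s hs; apply: (le_trans (ler_normB _ _)); apply: lerD => //.
    by rewrite normrM ler_wpM2l // ltW.
  by rewrite /c divfK ?subrr // gt_eqF.
have Dsmall : forall t, `|t| < eta / 2 -> D t = e (c * t).
  move=> t ht; rewrite -Lc // eL //; apply: lt_trans ht _.
  by rewrite ltr_pdivrMr // ltr_pMr // ltr1n.
have Dall : forall t, D t = e (c * t).
  move=> t.
  set N := Num.Def.archi_bound (`|t| / (eta / 2)).
  have hN : `|t| / (eta / 2) < N%:R by apply: archi_boundP; rewrite divr_ge0 // ltW.
  have N0 : (0 : R) < N%:R by apply: le_lt_trans hN; rewrite divr_ge0 // ltW.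
  have hs : `|t / N%:R| < eta / 2.
    by rewrite normrM normfV (ger0_norm (ltW N0)) ltr_pdivrMr // mulrC -ltr_pdivrMr.
  have -> : t = (t / N%:R) *~ N.
    by rewrite -[_ *~ N]/((t / N%:R) *+ N) -mulr_natr divfK // gt_eqF.
  rewrite (f_mulz' Dci Dh) Dsmall // cexpz_e; congr e.
  rewrite /=; field; by rewrite gt_eqF.
have [j hj] : exists j : int, c = j%:~R.
  have : D tpi = cone R.
    have [Kt gt] := hX tpi; apply: hker => //; rewrite gt; exact: e2pi.
  rewrite Dall => /e_eq1 [j hj]; exists j.
  by apply: (@mulIf _ tpi); [by rewrite gt_eqF // tpi_gt0 | rewrite hj].
exists j => x Kx.
by rewrite Dx // Dall hj -cexpz_e arg_e.
Qed.

End Full.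

Section Prods.
Variable R : realType.

Lemma cmul1 (z : R * R) : cmul z (cone R) = z.
Proof. by case: z => a b; rewrite /cmul /cone /=; congr pair; ring. Qed.

Lemma prod_e k (a : 'I_k -> R) (m : 'I_k -> int) :
  \big[@cmul R/cone R]_(i < k) cexpz (e (a i)) (m i) = e (\sum_(i < k) (m i)%:~R * a i).
Proof.
elim: k a m => [|k IH] a m; first by rewrite !big_ord0 e0.
by rewrite !big_ord_recl IH cexpz_e -eD.
Qed.

Lemma prod_circ k (z : 'I_k -> R * R) (m : 'I_k -> int) :
  (forall i, on_circle (z i)) ->
  \big[@cmul R/cone R]_(i < k) cexpz (z i) (m i) =
  e (\sum_(i < k) (m i)%:~R * arg (z i)).
Proof.
move=> zc; rewrite -prod_e; apply: eq_bigr => i _; by rewrite arg_e.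
Qed.

Lemma sum_congr_e k (a b : 'I_k -> R) (m : 'I_k -> int) :
  (forall i, e (a i) = e (b i)) ->
  e (\sum_(i < k) (m i)%:~R * a i) = e (\sum_(i < k) (m i)%:~R * b i).
Proof. by move=> h; rewrite -!prod_e; apply: eq_bigr => i _; rewrite h. Qed.

Definition ext k (j : int) (ms : 'I_k -> int) (i : 'I_k.+1) : int :=
  match unlift ord0 i with None => j | Some i' => ms i' end.

Lemma sum_ext k j (ms : 'I_k -> int) (a : 'I_k.+1 -> R) :
  \sum_(i < k.+1) (ext j ms i)%:~R * a i =
  j%:~R * a ord0 + \sum_(i < k) (ms i)%:~R * a (lift ord0 i).
Proof.
rewrite big_ord_recl /ext unlift_none; congr (_ + _).
by apply: eq_bigr => i _; rewrite liftK.
Qed.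

Variable T : topologicalType.

Lemma pair_cont (f1 f2 : T -> R) : continuous f1 -> continuous f2 ->
  continuous (fun x => (f1 x, f2 x)).
Proof. by move=> c1 c2 x; exact: (cvg_pair (c1 x) (c2 x)). Qed.

Lemma cmul_cont (f1 f2 : T -> R * R) : continuous f1 -> continuous f2 ->
  continuous (fun x => cmul (f1 x) (f2 x)).
Proof.
move=> c1 c2; rewrite /cmul; apply: pair_cont => x.
  by apply: cvgB; apply: cvgM; first [exact: fst_cont | exact: snd_cont].
by apply: cvgD; apply: cvgM; first [exact: fst_cont | exact: snd_cont].
Qed.

Lemma cconj_cont (f : T -> R * R) : continuous f -> continuous (fun x => cconj (f x)).
Proof.
move=> c; rewrite /cconj; apply: pair_cont; first exact: fst_cont.
by move=> x; apply: cvgN; exact: snd_cont.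
Qed.

Lemma cexpn_cont (f : T -> R * R) n : continuous f -> continuous (fun x => cexpn (f x) n).
Proof.
move=> c; elim: n => [|n IH]; first by move=> x; exact: cvg_cst.
rewrite /cexpn; under eq_fun do rewrite iterS -/(cexpn _ _).
exact: cmul_cont.
Qed.

Lemma cexpz_cont (f : T -> R * R) m : continuous f -> continuous (fun x => cexpz (f x) m).
Proof.
move=> c; case: m => n; rewrite /cexpz; first exact: cexpn_cont.
by apply: cexpn_cont; exact: cconj_cont.
Qed.

Lemma prod_cont k (F : 'I_k -> T -> R * R) : (forall i, continuous (F i)) ->
  continuous (fun x => \big[@cmul R/cone R]_(i < k) F i x).
Proof.
elim: k F => [|k IH] F hF.
  by under eq_fun do rewrite big_ord0; move=> x; exact: cvg_cst.
under eq_fun do rewrite big_ord_recl.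
by apply: cmul_cont => //; exact: IH.
Qed.

End Prods.

Section Fin.
Variables (R : realType) (G : topologicalZmodType).

Lemma char_ker_all (K : set G) (g h : G -> R * R) : compact K -> subgrp K ->
  is_character g -> is_character h ->
  (forall x, K x -> g x = cone R -> h x = cone R) ->
  exists j : int, forall x, K x -> h x = cexpz (g x) j.
Proof.
move=> cK sK gc hc hk; apply: (char_ker cK sK gc hc hk).
exact: (full_ker cK sK gc hc hk).
Qed.

Lemma e_diff (a b : R) : e a = e b -> e (a - b) = cone R.
Proof. by case/e_eqP => n ->; rewrite addrC addKr; exact: e_int. Qed.

Lemma finite_case k : forall (K : set G), compact K -> subgrp K ->
  forall (g : 'I_k -> G -> R * R) (t : 'I_k -> R * R),
  (forall i, is_character (g i)) -> (forall i, on_circle (t i)) ->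
  (forall m : 'I_k -> int,
     (forall x, K x -> \big[@cmul R/cone R]_(i < k) cexpz (g i x) (m i) = cone R) ->
     \big[@cmul R/cone R]_(i < k) cexpz (t i) (m i) = cone R) ->
  exists x, K x /\ forall i, g i x = t i.
Proof.
elim: k => [|k IH] K cK sK g t gc tc H.
  by exists 0; split; [exact: K0 | case].
have gci : forall i x, on_circle (g i x) by move=> i x; case: (gc i).
have gh : forall i x y, g i (x + y) = cmul (g i x) (g i y) by move=> i; case: (gc i).
set g0 := g ord0.
have sum0 : forall (a : 'I_k.+1 -> R) j,
    \sum_(i < k.+1) (ext j (fun _ => 0) i)%:~R * a i = j%:~R * a ord0.
  move=> a j; rewrite sum_ext big1 ?addr0 // => i _; by rewrite mulr0z mul0r.
have [x0 [Kx0 gx0]] : exists x, K x /\ g0 x = t ord0.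
  apply: (char_onto cK sK (gc ord0) (tc ord0)) => j hj.
  have hyp : forall x, K x -> \big[@cmul R/cone R]_(i < k.+1)
      cexpz (g i x) (ext j (fun _ => 0) i) = cone R.
    move=> x Kx; rewrite prod_circ; last by move=> i; exact: gci.
    by rewrite sum0 -cexpz_e arg_e // hj.
  by have := H _ hyp; rewrite prod_circ // sum0 -cexpz_e arg_e.
set K' := K `&` [set x | g0 x = cone R].
have cK' : compact K'.
  apply: compact_closedI => //.
  have -> : [set x | g0 x = cone R] = g0 @^-1` [set cone R] by [].
  apply: (continuous_closedP _).1; first by case: (gc ord0).
  exact: (accessible_closed_set1 (hausdorff_accessible (@hausRR R))).
have sK' : subgrp K'.
  split.
    by split; [exact: K0 | exact: (f0 (gci ord0) (gh ord0))].
  move=> x y [Kx gx] [Ky gy]; rewrite /g0 /= in gx gy *; split; first exact: KB.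
  change (g ord0 (x - y) = cone R).
  by rewrite (fB (gci ord0) (gh ord0)) gx gy subrr e0.
set gs := fun i => g (lift ord0 i).
set ts := fun i => t (lift ord0 i).
set s := fun i => e (arg (ts i) - arg (gs i x0)).
have [x1 [[Kx1 gx1] hx1]] : exists x, K' x /\ forall i, gs i x = s i.
  apply: IH => //; [by move=> i; exact: gc | by move=> i; exact: e_circle |].
  move=> ms hms.
  set S := fun x => \sum_(i < k) (ms i)%:~R * arg (gs i x).
  set chi := fun x => \big[@cmul R/cone R]_(i < k) cexpz (gs i x) (ms i).
  have chiE : forall x, chi x = e (S x).
    by move=> x; rewrite /chi prod_circ // => i; exact: gci.
  have chic : is_character chi.
    split.
    - by move=> x; rewrite chiE; exact: e_circle.
    - move=> x y; rewrite !chiE -eD /S -big_split /=.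
      under [in RHS]eq_bigr do rewrite -mulrDr.
      apply: sum_congr_e => i; rewrite /gs; exact: (fD (gci _) (gh _)).
    apply: prod_cont => i; apply: cexpz_cont; by case: (gc (lift ord0 i)).
  have hk : forall x, K x -> g0 x = cone R -> chi x = cone R.
    by move=> x Kx g0x; apply: hms.
  have [jj hjj] := char_ker_all cK sK (gc ord0) chic hk.
  have hjj' : forall x, K x -> e (S x) = e (jj%:~R * arg (g0 x)).
    by move=> x Kx; rewrite -chiE hjj // -cexpz_e (arg_e (gci ord0 x)).
  have hyp : forall x, K x -> \big[@cmul R/cone R]_(i < k.+1)
      cexpz (g i x) (ext (- jj) ms i) = cone R.
    move=> x Kx; rewrite prod_circ; last by move=> i; exact: gci.
    rewrite sum_ext -/(S x) mulrNz mulNr addrC; exact: e_diff (hjj' x Kx).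
  have := H _ hyp; rewrite prod_circ // sum_ext => /e_eq1 [n1 hn1].
  have [n2 hn2] := e_eqP (hjj' x0 Kx0).
  rewrite prod_e -/g0 gx0 in hn2 *.
  have -> : \sum_(i < k) (ms i)%:~R * (arg (ts i) - arg (gs i x0)) =
      \sum_(i < k) (ms i)%:~R * arg (ts i) - S x0.
    by rewrite /S -sumrB; apply: eq_bigr => i _; rewrite mulrBr.
  rewrite hn2; move: hn1; rewrite mulrNz mulNr => hn1.
  have -> : \sum_(i < k) (ms i)%:~R * arg (ts i) - (jj%:~R * arg (t ord0) + n2%:~R * tpi)
      = (n1 - n2)%:~R * tpi.
    rewrite intrB mulrBl -hn1 /ts; ring.
  exact: e_int.
exists (x0 + x1); split; first exact: KD.
move=> i; case: (unliftP ord0 i) => [i' ->|->].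
  rewrite gh; have := hx1 i'; rewrite /gs /s /ts => ->.
  by rewrite -[g _ x0](arg_e (gci _ _)) -eD addrC subrK arg_e.
by rewrite gh -/g0 gx1 cmul1.
Qed.
End Fin.

Unset Implicit Arguments.

Lemma big_cone (R : realType) k (F : 'I_k -> R * R) :
  (forall i, F i = cone R) -> \big[@cmul R/cone R]_(i < k) F i = cone R.
Proof.
elim: k F => [|k IH] F hF; first by rewrite big_ord0.
by rewrite big_ord_recl IH // hF cmul1.
Qed.

Section PG. Variable G : topologicalZmodType.
Definition pG : Type := G.
HB.instance Definition _ := Topological.copy pG G.
HB.instance Definition _ := isPointed.Build pG (0 : G).
Lemma cc_pG : compact [set: G] -> cover_compact ([set: pG]).
Proof. move=> h; rewrite -compact_cover. exact: h. Qed.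
End PG.

Theorem corollary2p3 (R : realType) (G : topologicalZmodType)
  (G_compact : compact [set: G]) (G_hausdorff : hausdorff_space G)
  (N : nat) (N_pos : (0 < N)%N) (E : set (G -> R * R))
  (E_chars : forall g, E g -> is_character g)
  (E_indep : independent E)
  (E_range : forall g, E g -> forall z, unit_roots N z -> exists x : G, g x = z) :
  N_PR N E.
Proof.
move=> phi hphi.
have [//|nex] := pselect (exists x : G, forall g, E g -> phi g = g x).
exfalso.
have cov : [set: G] `<=` \bigcup_(g in E) [set x | g x <> phi g].
  move=> x _; have := nex; move/forallNP => /(_ x) /existsNP [g /not_implyP [Eg ne]].
  by exists g => //= h; apply: ne; rewrite h.
have cG := @cc_pG G G_compact.
have [|D' sD' hD'] := cG _ E (fun g => [set x : pG G | g x <> phi g]) _ cov.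
  move=> g Eg.
  have -> : [set x | g x <> phi g] = ~` (g @^-1` [set phi g]) by [].
  apply: closed_openC; apply: (continuous_closedP _).1.
    by case: (E_chars g Eg).
  exact: (accessible_closed_set1 (hausdorff_accessible (@hausRR R))).
set s := finmap.enum_fset D'.
set k := size s.
set gi := fun i : 'I_k => nth (fun _ => cone R) s i.
have gin : forall i : 'I_k, gi i \in s by move=> i; rewrite /gi mem_nth.
have gE : forall i, E (gi i) by move=> i; have := sD' _ (gin i); rewrite inE.
have [x [_ hx]] : exists x, [set: G] x /\ forall i, gi i x = phi (gi i).
  apply: finite_case => //.
  - by move=> i; exact: E_chars.
  - by move=> i; case: (hphi _ (gE i)).
  move=> m hm; apply: big_cone => i.
  have hinj : injective gi.
    move=> i1 i2 /eqP; rewrite /gi nth_uniq ?finmap.fset_uniq // => /eqP; exact: ord_inj.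
  have := E_indep k gi m hinj gE (fun x => hm x I) i.
  have [y hy] := E_range _ (gE i) _ (hphi _ (gE i)).
  by move=> /(_ y); rewrite hy.
have [g Dg hg] := hD' x I.
move: Dg => /= Dg.
have hi : (index g s < k)%N by rewrite /k index_mem.
apply: hg; have := hx (Ordinal hi); rewrite /gi /= nth_index //.
Qed.
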